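(* Let $V=\{0,1,2,3,4\}$ and $\mathcal{E}=\{(0,1),(1,2),(1,3),(2,4),(3,4)\}$. Let $A$ be the $|V|\times|\mathcal{E}|$ node–arc incidence matrix of the directed graph $(V,\mathcal{E})$ (for node $v$ and arc $e$, $A_{v,e}=1$ if $e$ leaves $v$, $A_{v,e}=-1$ if $e$ enters $v$, and $0$ otherwise), let $B$ be the $|\mathcal{E}|\times|V|$ matrix with $B_{(i,j),i}=1$ for each $(i,j)\in\mathcal{E}$ and all other entries $0$, let $I_{\mathcal{E}}$ and $I_V$ be identity matrices of dimensions $|\mathcal{E}|$ and $|V|$, and let $e_V^T$ be the $1\times|V|$ row vector of ones. Then the block matrix \[ C=\begin{pmatrix} A & 0 & 0\\ 0 & I_{\mathcal{E}} & -B\\ -I_{\mathcal{E}} & I_{\mathcal{E}} & 0\\ 0 & 0 & e_V^T\\ 0 & 0 & I_V\end{pmatrix}, \] whose three column blocks correspond to variables $\alpha\in\mathbb{R}^{\mathcal{E}}$, $w\in\mathbb{R}^{\mathcal{E}}$, $\delta\in\mathbb{R}^{V}$, is not totally unimodular.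
   Context: $C$ is the constraint matrix of the linearised adversarial sub-problem (a longest-path problem with up to $\Gamma$ units of delay) of the two-stage robust resource-constrained project scheduling problem, restricted to the arcs $\mathcal{E}$ of the extended project network: the row blocks correspond respectively to flow-conservation/source/sink constraints on $\alpha$, the constraints $w_{ij}\le\delta_i$, the constraints $w_{ij}\le\alpha_{ij}$, the budget constraint $\sum_i\delta_i\le\Gamma$, and the bounds $\delta_i\le1$. A matrix is totally unimodular if every square submatrix has determinant in $\{-1,0,1\}$. *)

(* Defs.v *)
From HB Require Import structures.
From mathcomp Require Import all_boot all_order all_algebra.
Set Implicit Arguments. Unset Strict Implicit. Unset Printing Implicit Defensive.
Import Order.TTheory GRing.Theory Num.Theory.
Local Open Scope ring_scope.

Definition totally_unimodular (m n : nat) (M : 'M[int]_(m, n)) : Prop :=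
  forall (k : nat) (f : 'I_k -> 'I_m) (g : 'I_k -> 'I_n),
    injective f -> injective g ->
    \det (mxsub f g M) \in [:: -1; 0; 1].

Definition arc_tail (e : 'I_5) : 'I_5 := inord (nth 0%N [:: 0; 1; 1; 2; 3]%N e).
Definition arc_head (e : 'I_5) : 'I_5 := inord (nth 0%N [:: 1; 2; 3; 4; 4]%N e).

Definition incA : 'M[int]_(5, 5) :=
  \matrix_(v < 5, e < 5) ((v == arc_tail e)%:R - (v == arc_head e)%:R).

Definition matB : 'M[int]_(5, 5) :=
  \matrix_(e < 5, v < 5) (v == arc_tail e)%:R.

Definition matC : 'M[int]_(5 + (5 + (5 + (1 + 5))), 5 + (5 + 5)) :=
  col_mx (row_mx incA (row_mx 0 0))
 (col_mx (row_mx 0 (row_mx 1%:M (- matB)))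
 (col_mx (row_mx (- 1%:M) (row_mx 1%:M 0))
 (col_mx (row_mx 0 (row_mx 0 (const_mx 1 : 'M[int]_(1, 5))))
         (row_mx 0 (row_mx 0 1%:M))))).

(* Main.v *)
Require Import Defs.
From mathcomp Require Import all_boot all_order all_algebra.
Import GRing.Theory.
Local Open Scope ring_scope.
Definition o (k : nat) (H : (k < 5)%N) : 'I_5 := Ordinal H.
Definition fr (i : 'I_5) : 'I_(5 + (5 + (5 + (1 + 5)))) :=
  match val i with
  | 0 => lshift _ (o 1 isT)
  | 1 => rshift 5 (lshift _ (o 1 isT))
  | 2 => rshift 5 (lshift _ (o 2 isT))
  | 3 => rshift 5 (rshift 5 (lshift _ (o 1 isT)))
  | _ => rshift 5 (rshift 5 (lshift _ (o 2 isT)))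
  end.
Definition gc (i : 'I_5) : 'I_(5 + (5 + 5)) :=
  match val i with
  | 0 => lshift _ (o 1 isT)
  | 1 => lshift _ (o 2 isT)
  | 2 => rshift 5 (lshift _ (o 1 isT))
  | 3 => rshift 5 (lshift _ (o 2 isT))
  | _ => rshift 5 (rshift 5 (o 1 isT))
  end.
Lemma fr_inj : injective fr.
Proof.
move=> [[|[|[|[|[|?]]]]] Hi] [[|[|[|[|[|?]]]]] Hj] //= H;
  try (by apply/val_inj); by move/(congr1 val): H.
Qed.
Lemma gc_inj : injective gc.
Proof.
move=> [[|[|[|[|[|?]]]]] Hi] [[|[|[|[|[|?]]]]] Hj] //= H;
  try (by apply/val_inj); by move/(congr1 val): H.
Qed.
Definition L : seq (seq int) := [:: [:: 1; 1; 0; 0; 0]; [:: 0; 0; 1; 0; -1];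
  [:: 0; 0; 0; 1; -1]; [:: -1; 0; 1; 0; 0]; [:: 0; -1; 0; 1; 0]].
Lemma subE : mxsub fr gc matC = \matrix_(i, j) nth 0 (nth [::] L i) j.
Proof.
apply/matrixP=> i j; rewrite [LHS]mxE [RHS]mxE.
case: i => [[|[|[|[|[|?]]]]] Hi] //; case: j => [[|[|[|[|[|?]]]]] Hj] //;
 rewrite /fr /gc /matC /= !(col_mxEu, col_mxEd, row_mxEl, row_mxEr) ?mxE //=.
all: rewrite /arc_tail /arc_head /= -!val_eqE /= !inordK //.
Qed.
Lemma expd n (A : 'M[int]_n.+1) : \det A =
  \sum_(j < n.+1) A ord0 j * ((-1) ^+ j * \det (\matrix_(i, k) A (lift ord0 i) (lift j k))).
Proof.
rewrite (expand_det_row _ ord0); apply: eq_bigr => j _; congr (_ * _).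
rewrite /cofactor add0n; congr (_ * \det _); apply/matrixP => i k; by rewrite !mxE.
Qed.
Lemma detE : \det (\matrix_(i, j) nth 0 (nth [::] L i) j : 'M[int]_5) = 2.
Proof.
do 5 (rewrite !expd !big_ord_recl !big_ord0 !mxE /= ?mul0r ?add0r ?addr0).
by rewrite !det_mx00.
Qed.
Theorem mainTheorem2 : ~ totally_unimodular matC.
Proof.
move=> /(_ 5 fr gc fr_inj gc_inj); by rewrite subE detE.
Qed.
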